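(* If $G$ is a $\gamma_{\rm tg}$-critical graph and $v$ is any vertex of $G$, then no neighbor of $v$ is an optimal first move of Dominator in the Dominator-start total domination game on $G|v$.
   Context: Total domination game on a graph without isolated vertices: Dominator and Staller alternately choose vertices, each chosen vertex must be adjacent to some vertex not yet totally dominated (vertices declared totally dominated count as totally dominated); the game ends when no legal move exists; Dominator minimizes, Staller maximizes the number of moves. For $S\subseteq V(G)$, $G|S$ is $G$ with the vertices of $S$ declared already totally dominated; $\gamma_{\rm tg}(G|S)$ and $\gamma'_{\rm tg}(G|S)$ are the optimal numbers of moves when Dominator, respectively Staller, moves first; $\gamma_{\rm tg}(G)=\gamma_{\rm tg}(G|\emptyset)$, $G|v=G|\{v\}$. A vertex $d$ is an optimal first move of Dominator on $G|v$ if it is a legal move and $\gamma_{\rm tg}(G|v)=1+\gamma'_{\rm tg}(G|(\{v\}\cup N(d)))$. $G$ is $\gamma_{\rm tg}$-critical if $\gamma_{\rm tg}(G|v)<\gamma_{\rm tg}(G)$ for every vertex $v$. *)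

(* Defs.v *)
From mathcomp Require Import all_boot.
Set Implicit Arguments. Unset Strict Implicit. Unset Printing Implicit Defensive.

Definition simple_graph_noiso (T : finType) (e : rel T) : Prop :=
  symmetric e /\ irreflexive e /\ (forall v : T, exists u : T, e v u).

Definition nbh (T : finType) (e : rel T) (u : T) : {set T} := [set w | e u w].

(* A game position is described by the set D of vertices that are already
   totally dominated (declared ones plus neighbours of chosen vertices).  Each legal move adds a new vertex to D, so fuel
   #|T| suffices and every value is <= #|T|; hence #|T| is a neutral
   element for the minimum over a nonempty set of moves. *)
Fixpoint gval (T : finType) (e : rel T) (n : nat) (D : {set T}) (dom : bool)
  : nat :=
  match n with
  | 0 => 0
  | n'.+1 =>
    let moves := [set u | ~~ (nbh e u \subset D)] in
    if moves == set0 then 0 else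
    if dom then
      (\big[minn/#|T|]_(u in moves) (gval e n' (D :|: nbh e u) false)).+1
    else
      (\max_(u in moves) gval e n' (D :|: nbh e u) true).+1
  end.

Definition gtg (T : finType) (e : rel T) (S : {set T}) : nat :=
  gval e #|T| S true.
Definition gtg' (T : finType) (e : rel T) (S : {set T}) : nat :=
  gval e #|T| S false.

Definition tg_critical (T : finType) (e : rel T) : Prop :=
  forall v : T, gtg e [set v] < gtg e set0.

Definition optimal_first_move (T : finType) (e : rel T) (v d : T) : Prop :=
  ~~ (nbh e d \subset [set v]) /\
  gtg e [set v] = (gtg' e ([set v] :|: nbh e d)).+1.

(* Main.v *)
Require Import Defs.
From mathcomp Require Import all_boot.

Lemma gval_stable (T : finType) (e : rel T) (n : nat) :
  forall (D : {set T}) (b : bool), #|~: D| <= n ->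
  gval e n D b = gval e n.+1 D b.
Proof.
elim: n => [|n IH] D b H.
  have HD : D = setT.
    apply/setP => x; rewrite inE; apply/negPn; apply/negP => Hx.
    have : 0 < #|~: D| by apply/card_gt0P; exists x; rewrite inE.
    by rewrite leqn0 in H; rewrite (eqP H).
  rewrite HD /=.
  case: ifP => // /negbT/set0Pn [x]; rewrite inE => /negP []; exact: subsetT.
have step : forall u, u \in [set u | ~~ (nbh e u \subset D)] ->
    gval e n (D :|: nbh e u) (~~ b) = gval e n.+1 (D :|: nbh e u) (~~ b).
  move=> u; rewrite inE => /subsetPn [w Hw1 Hw2].
  apply: IH.
  have : #|~: (D :|: nbh e u)| < #|~: D|.
    apply: proper_card; apply/properP; split.
      by apply/subsetP => x; rewrite !inE negb_or => /andP [].
    by exists w; rewrite !inE ?Hw2 // negbK; move: Hw1; rewrite inE => ->; rewrite orbT.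
  by move=> H2; rewrite -ltnS; exact: leq_trans H2 H.
rewrite [in LHS]/= [in RHS]/=.
case: ifP => // _; case: b step => step.
  congr _.+1; apply: eq_bigr => u Hu; exact: (step u Hu).
congr _.+1; apply: eq_bigr => u Hu; exact: (step u Hu).
Qed.

Lemma gval_stable_le (T : finType) (e : rel T) (m n : nat) (D : {set T}) (b : bool) :
  #|~: D| <= m -> m <= n -> gval e m D b = gval e n D b.
Proof.
move=> Hm; elim: n => [|n IH]; first by rewrite leqn0 => /eqP ->.
rewrite leq_eqVlt => /orP [/eqP -> // | Hlt].
rewrite IH // gval_stable //; exact: leq_trans Hm Hlt.
Qed.

Lemma bigmin_le_seq (I : eqType) (r : seq I) (P : pred I) (F : I -> nat) x j :
  j \in r -> P j -> \big[minn/x]_(i <- r | P i) F i <= F j.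
Proof.
elim: r => [//|a r IH]; rewrite in_cons big_cons => /orP [/eqP <- -> | Hj Pj].
  exact: geq_minl.
case: (P a); last exact: IH.
exact: leq_trans (geq_minr _ _) (IH Hj Pj).
Qed.

Theorem lemma4p4 (T : finType) (e : rel T) :
  simple_graph_noiso e -> tg_critical e ->
  forall v u : T, e v u -> ~ optimal_first_move e v u.
Proof.
move=> [Hsym _] Hcrit v u Hvu [_ Hopt].
have Hvn : v \in nbh e u by rewrite inE Hsym.
have HU : [set v] :|: nbh e u = nbh e u.
  apply/setP => x; rewrite in_setU in_set1; case: eqP => // ->; by rewrite Hvn.
have := Hcrit v.
rewrite Hopt HU /gtg /gtg'.
have Hcard : 0 < #|T| by apply/card_gt0P; exists v.
have Hc : #|~: nbh e u| <= #|T|.-1.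
  rewrite -ltnS prednK //; apply: (@leq_ltn_trans #|~: [set v]|).
    by apply: subset_leq_card; apply/subsetP => x; rewrite !in_setC in_set1; apply: contra => /eqP ->.
  by rewrite cardsCs setCK cards1 subn1 prednK.
rewrite -(@gval_stable_le _ _ _ _ _ false Hc (leq_pred _)).
rewrite -{2}(prednK Hcard) /=.
have Hmv : u \in [set w | ~~ (nbh e w \subset set0)].
  rewrite inE; apply/subsetPn; exists v => //; by rewrite inE.
have -> : ([set w | ~~ (nbh e w \subset set0)] == set0) = false.
  by apply/negbTE/set0Pn; exists u.
rewrite ltnS leqNgt => /negP; apply.
rewrite ltnS.
apply: leq_trans (@bigmin_le_seq T (index_enum T) (mem [set w | ~~ (nbh e w \subset set0)]) (fun u0 => gval e #|T|.-1 (set0 :|: nbh e u0) false) #|T| u (mem_index_enum u) Hmv) _.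
by rewrite set0U.
Qed.
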